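(* Let $n\ge2$ and $\delta>0$. For $i\in\{1,2\}$ and $j\in\{1,\dots,n\}$ let $z_j^{(i)}\in\mathbb{R}$ be the standardized samples defined in the context, let $\tilde z_j^{(i)}\in\delta\mathbb{Z}$ be a nearest integer multiple of $\delta$ to $z_j^{(i)}$ (so $|z_j^{(i)}-\tilde z_j^{(i)}|\le\delta/2$), and let $r=\frac{1}{n-1}\sum_{j=1}^n z_j^{(1)}z_j^{(2)}$ and $\tilde r=\frac{1}{n-1}\sum_{j=1}^n\tilde z_j^{(1)}\tilde z_j^{(2)}$. If $R\in\mathbb{R}$ satisfies $|\tilde z_j^{(i)}|\le R$ for all $i\in\{1,2\}$ and $j\in\{1,\dots,n\}$, then $$|r-\tilde r|\le\frac{n\delta}{n-1}\left(R+\frac{\delta}{4}\right).$$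
   Context: For $i=1,2$, $x_1^{(i)},\dots,x_n^{(i)}$ are real samples (not all equal), $\bar x^{(i)}$ is their mean, $s^{(i)}=\sqrt{\frac{1}{n-1}\sum_{j=1}^n(x_j^{(i)}-\bar x^{(i)})^2}$, and $z_j^{(i)}=(x_j^{(i)}-\bar x^{(i)})/s^{(i)}$; thus $r$ is the sample Pearson correlation of the two sample sequences. (In the paper, $\tilde z_j^{(i)}$ is the nearest element of the fixed-point set $\{x\delta: x\in\mathbb{Z}, |x|\le M\}$ for some $M\in\mathbb{N}$; the bound does not depend on $M$.) *)

(* Defs.v *)
From HB Require Import structures.
From mathcomp Require Import all_boot all_order all_algebra.
Set Implicit Arguments. Unset Strict Implicit. Unset Printing Implicit Defensive.
Import Order.TTheory GRing.Theory Num.Theory.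
Local Open Scope ring_scope.

Definition smean (R : realFieldType) (n : nat) (x : 'I_n -> R) : R :=
  (\sum_(j < n) x j) / n%:R.

Definition ssd (R : rcfType) (n : nat) (x : 'I_n -> R) : R :=
  Num.sqrt ((\sum_(j < n) (x j - smean x) ^+ 2) / (n.-1)%:R).

Definition zscore (R : rcfType) (n : nat) (x : 'I_n -> R) (j : 'I_n) : R :=
  (x j - smean x) / ssd x.

Definition nearest_mult (R : realFieldType) (delta t y : R) : Prop :=
  (exists k : int, y = k%:~R * delta) /\
  (forall k : int, `|t - y| <= `|t - k%:~R * delta|).

Definition corr_sum (R : realFieldType) (n : nat) (a b : 'I_n -> R) : R :=
  (\sum_(j < n) a j * b j) / (n.-1)%:R.

(* Main.v *)
Require Import Defs.
From HB Require Import structures.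
From mathcomp Require Import all_boot all_order all_algebra.
From mathcomp Require Import ring lra.
Import Order.TTheory GRing.Theory Num.Theory.
Local Open Scope ring_scope.

Lemma near_bound (R : rcfType) (delta t y : R) : 0 < delta ->
  nearest_mult delta t y -> `|t - y| <= delta / 2%:R.
Proof.
move=> dp [[k ->] H].
have H1 := H (k + 1). have H2 := H (k - 1).
rewrite intrD intrB /= mulrDl mulrBl mul1r in H1 H2.
set d := t - k%:~R * delta in H1 H2 *.
have E1 : t - (k%:~R * delta + delta) = d - delta by rewrite /d; ring.
have E2 : t - (k%:~R * delta - delta) = d + delta by rewrite /d; ring.
rewrite E1 in H1; rewrite E2 in H2.
have : d ^+ 2 <= (d - delta) ^+ 2 by rewrite -real_normK ?num_real // -[X in _ <= X]real_normK ?num_real // lerXn2r // ?nnegrE.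
have : d ^+ 2 <= (d + delta) ^+ 2 by rewrite -real_normK ?num_real // -[X in _ <= X]real_normK ?num_real // lerXn2r // ?nnegrE.
move=> A B.
rewrite ler_norml; apply/andP; split; nra.
Qed.

Lemma term_bound (R : rcfType) (delta Rb z0 z1 t0 t1 : R) : 0 < delta ->
  `|z0 - t0| <= delta / 2%:R -> `|z1 - t1| <= delta / 2%:R ->
  `|t0| <= Rb -> `|t1| <= Rb ->
  `|z0 * z1 - t0 * t1| <= delta * (Rb + delta / 4%:R).
Proof.
move=> dp h0 h1 b0 b1.
have -> : z0 * z1 - t0 * t1 = (z0 - t0) * t1 + t0 * (z1 - t1) + (z0 - t0) * (z1 - t1) by ring.
apply: (le_trans (ler_normD _ _)).
apply: (le_trans (lerD (ler_normD _ _) (lexx _))).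
rewrite !normrM.
have p1 : `|z0 - t0| * `|t1| <= delta / 2%:R * Rb by apply: ler_pM.
have p2 : `|t0| * `|z1 - t1| <= Rb * (delta / 2%:R) by apply: ler_pM.
have p3 : `|z0 - t0| * `|z1 - t1| <= delta / 2%:R * (delta / 2%:R) by apply: ler_pM.
lra.
Qed.

Theorem lemma2 (R : rcfType) (n : nat) (delta Rb : R)
  (x : 'I_2 -> 'I_n -> R) (zt : 'I_2 -> 'I_n -> R) :
  (2 <= n)%N -> 0 < delta ->
  (forall i : 'I_2, exists j1 j2 : 'I_n, x i j1 != x i j2) ->
  (forall (i : 'I_2) (j : 'I_n), nearest_mult delta (zscore (x i) j) (zt i j)) ->
  (forall (i : 'I_2) (j : 'I_n), `|zt i j| <= Rb) ->
  `|corr_sum (zscore (x 0)) (zscore (x 1)) - corr_sum (zt 0) (zt 1)|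
    <= n%:R * delta / (n.-1)%:R * (Rb + delta / 4%:R).
Proof.
move=> n2 dp _ Hn Hb.
have np : 0 < (n.-1)%:R :> R by rewrite ltr0n; move: n2; case: (n) => [|[|m]].
rewrite /corr_sum -mulrBl -sumrB normrM [`|_^-1|]ger0_norm; last by rewrite invr_ge0 ltW.
have -> : n%:R * delta / (n.-1)%:R * (Rb + delta / 4%:R)
  = (n%:R * (delta * (Rb + delta / 4%:R))) / (n.-1)%:R by field; lra.
rewrite ler_pM2r; last by rewrite invr_gt0.
apply: (le_trans (ler_norm_sum _ _ _)).
have -> : n%:R * (delta * (Rb + delta / 4%:R)) = \sum_(j < n) (delta * (Rb + delta / 4%:R)).
  by rewrite sumr_const card_ord mulr_natl.
apply: ler_sum => j _.
apply: term_bound => //; by apply: near_bound.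
Qed.
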